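(* If $q=p^n$ is odd, then $E_{(q-3)/2}(x)+E_{(q-1)/2}(x)\equiv(x-2)^{(q-1)/2}\pmod p$ as polynomials in $\mathbb Z[x]$.
   Context: $E_k\in\mathbb Z[x]$ (Dickson polynomials of the second kind) are defined by $E_0=1$, $E_1=x$, $E_{k+2}=xE_{k+1}-E_k$. *)

(* Defs.v *)
From HB Require Import structures.
From mathcomp Require Import all_boot all_order all_algebra.
Set Implicit Arguments. Unset Strict Implicit. Unset Printing Implicit Defensive.
Import GRing.Theory.
Local Open Scope ring_scope.

(* Dickson polynomials of the second kind: E_0 = 1, E_1 = x, E_{k+2} = x E_{k+1} - E_k *)
Fixpoint dickson2_pair (k : nat) : {poly int} * {poly int} :=
  match k with
  | 0%N => (1, 'X)
  | k'.+1 => let (a, b) := dickson2_pair k' in (b, 'X * b - a)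
  end.

Definition E (k : nat) : {poly int} := (dickson2_pair k).1.

Definition poly_cong_mod (m : int) (f g : {poly int}) : Prop :=
  forall i : nat, (m %| (f - g)`_i)%Z.

(* Main.v *)
Require Import Defs.
From HB Require Import structures.
From mathcomp Require Import all_boot all_order all_algebra.
From mathcomp Require Import zify ring.
Import GRing.Theory.
Local Open Scope ring_scope.

Lemma pairS k : dickson2_pair k.+1 =
  ((dickson2_pair k).2, 'X * (dickson2_pair k).2 - (dickson2_pair k).1).
Proof. by rewrite /=; case: (dickson2_pair k). Qed.

Lemma ES k : E k.+2 = 'X * E k.+1 - E k.
Proof. by rewrite /E /=; case: (dickson2_pair k). Qed.

Definition Q (k : nat) : {poly int} :=
  \poly_(j < k.+1) (('C(k.+1 + j, j.*2.+1))%:R : int).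

Lemma coefQ k j : (Q k)`_j = ('C(k.+1 + j, j.*2.+1))%:R.
Proof.
rewrite coef_poly; case: ltnP => // H.
by rewrite bin_small //; lia.
Qed.

Lemma binrec N r : ('C(N.+2, r.+2) + 'C(N, r.+2) = 'C(N, r) + 2 * 'C(N.+1, r.+2))%N.
Proof. rewrite !binS; lia. Qed.

Lemma QS k : Q k.+2 = ('X + 2%:P) * Q k.+1 - Q k.
Proof.
apply/polyP => j.
rewrite coefB mulrDl coefD coefCM mulrC coefMX !coefQ.
case: j => [|i] /=.
  rewrite !addn0 !bin1 add0r; lia.
have := binrec (k.+2 + i) (i.*2.+1).
have -> : (k.+3 + i.+1 = (k.+2 + i).+2)%N by lia.
have -> : (k.+2 + i.+1 = (k.+2 + i).+1)%N by lia.
have -> : (k.+1 + i.+1 = (k.+2 + i))%N by lia.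
have -> : ((i.+1).*2.+1 = (i.*2.+1).+2)%N by lia.
move=> H.
apply: (addIr ('C(k.+2 + i, (i.*2.+1).+2))%:R).
rewrite -natrD H natrD natrM subrK /=; ring.
Qed.

Lemma EQ k : E k = Q k \Po ('X - 2%:P) /\ E k.+1 = Q k.+1 \Po ('X - 2%:P).
Proof.
elim: k => [|k [IH1 IH2]].
  have Q0 : Q 0 = 1.
    apply/polyP => j; rewrite coefQ coefC; case: j => [|j] //=.
    by rewrite bin_small //; lia.
  have Q1 : Q 1 = 'X + 2%:P.
    apply/polyP => j; rewrite coefQ coefD coefX coefC.
    case: j => [|[|j]] //=. by rewrite bin_small //; lia.
  split; first by rewrite Q0 comp_polyC.
  by rewrite Q1 comp_polyD comp_polyX comp_polyC /E /= subrK.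
split=> //.
rewrite ES QS comp_polyB comp_polyM comp_polyD comp_polyX comp_polyC subrK.
by rewrite -IH1 -IH2.
Qed.

Lemma cong_comp (p : int) (D u : {poly int}) :
  (forall j, (p %| D`_j)%Z) -> forall i, (p %| (D \Po u)`_i)%Z.
Proof.
move=> H i.
have -> : D = p *: \poly_(j < size D) ((D`_j %/ p)%Z).
  apply/polyP => j; rewrite coefZ coef_poly.
  case: ltnP => Hj; first by rewrite mulrC divzK.
  by rewrite mulr0 nth_default.
by rewrite comp_polyZ coefZ; apply: dvdz_mulr; apply: dvdzz.
Qed.

Lemma key (p e m j : nat) : prime p -> (p ^ e = m.*2 + 3)%N -> (j <= m)%N ->
  (p %| 'C(m.+1 + j, j.*2.+1) + 'C(m.+2 + j, j.*2.+1))%N.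
Proof.
move=> pp hq hj.
have H1 := mul_bin_down (m.+2 + j) (j.*2.+1).
have ee : ((m.+2 + j).-1 = m.+1 + j)%N by lia.
rewrite ee in H1.
have H2 : ((m.+2 + j) * ('C(m.+1 + j, j.*2.+1) + 'C(m.+2 + j, j.*2.+1))
          = p ^ e * 'C(m.+2 + j, j.*2.+1))%N.
  rewrite mulnDr H1 hq; lia.
apply/negPn/negP => hnd.
have cop : coprime (p ^ e) ('C(m.+1 + j, j.*2.+1) + 'C(m.+2 + j, j.*2.+1)).
  by apply: coprimeXl; rewrite prime_coprime.
have : (p ^ e %| m.+2 + j)%N.
  by rewrite -(Gauss_dvdl _ cop) H2 dvdn_mulr.
move/(dvdn_leq (isT : (0 < m.+2 + j)%N)).
rewrite hq; lia.
Qed.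

Theorem corollary7p6 (p n : nat) :
  prime p -> (0 < n)%N -> odd (p ^ n) ->
  poly_cong_mod (p%:Z)
    (E ((p ^ n - 3) %/ 2) + E ((p ^ n - 1) %/ 2))
    (('X - 2%:P) ^+ ((p ^ n - 1) %/ 2)).
Proof.
move=> pp n0 oq.
have p1 := prime_gt1 pp.
have qge : (p <= p ^ n)%N.
  clear -p1 n0; case: n n0 => // n' _; rewrite expnS.
  have := expn_gt0 p n'; rewrite (ltnW p1) /= => h; nia.
have m2 := modn2 (p ^ n); rewrite oq /= in m2.
set m := ((p ^ n - 3) %/ 2)%N.
have hq : (p ^ n = m.*2 + 3)%N by rewrite /m; lia.
have -> : ((p ^ n - 1) %/ 2 = m.+1)%N by rewrite hq; lia.
rewrite (proj1 (EQ m)) (proj2 (EQ m)) -comp_Xn_poly.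
move=> i; rewrite -comp_polyD -comp_polyB.
apply: cong_comp => j.
rewrite coefB coefD !coefQ coefXn.
case: (ltngtP j m.+1) => hj.
- rewrite subr0 -natrD dvdzE natz absz_nat.
  apply: (key _ _ _ _ pp hq); lia.
- rewrite !bin_small ?subr0 ?addr0 ?dvdz0 //; lia.
- rewrite hj bin_small; last lia.
  have -> : (m.+2 + m.+1 = (m.+1).*2.+1)%N by lia.
  by rewrite binn add0r subrr dvdz0.
Qed.
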